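(* Let $\vec G=(V,E,\omega)$ be a weighted directed Eulerian graph with positive in-degrees $\deg^-(v)$, and for $S\subseteq V$ let $\Psi(S)=\sum_{v\in S}\sum_{(u,v)\in E,\,u\in S}\frac{\omega((u,v))}{\deg^-(v)}$. If $S\neq\emptyset$ satisfies $\Psi(S)/|S|\le\frac12$, then there is a subset $S'\subseteq S$ with $|S'|\ge\frac14|S|$ such that every $s\in S'$ satisfies $$\sum_{(v,s)\in E,\,v\notin S}\omega((v,s))\ge\frac14\deg^-(s).$$
   Context: $\deg^-(v)$ denotes the weighted in-degree of $v$ in $\vec G$; Eulerian means in-degree equals out-degree at every vertex. *)

(* Defs.v *)
From mathcomp Require Import all_boot all_order all_algebra.
Set Implicit Arguments. Unset Strict Implicit. Unset Printing Implicit Defensive.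
Import Order.TTheory GRing.Theory Num.Theory.
Local Open Scope ring_scope.

(* A weighted directed graph on a finite vertex set V is encoded by a weight
   function w : V -> V -> R with w u v >= 0; (u,v) is an edge iff w u v > 0
   (absent edges have weight 0, so sums over edges = sums over all pairs). *)

Definition nonneg_weights (R : realFieldType) (V : finType) (w : V -> V -> R) :=
  forall u v, 0 <= w u v.

Definition indeg (R : realFieldType) (V : finType) (w : V -> V -> R) (v : V) : R :=
  \sum_(u : V) w u v.
Definition outdeg (R : realFieldType) (V : finType) (w : V -> V -> R) (v : V) : R :=
  \sum_(u : V) w v u.

Definition eulerian (R : realFieldType) (V : finType) (w : V -> V -> R) :=
  forall v, indeg w v = outdeg w v.

Definition Psi (R : realFieldType) (V : finType) (w : V -> V -> R) (S : {set V}) : R :=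
  \sum_(v in S) \sum_(u in S) w u v / indeg w v.

(* Main.v *)
Require Import Defs.
From mathcomp Require Import all_boot all_order all_algebra.
From mathcomp Require Import lra.
Import Order.TTheory GRing.Theory Num.Theory.
Local Open Scope ring_scope.

Theorem lemmaC3 (R : realFieldType) (V : finType) (w : V -> V -> R)
  (hw : nonneg_weights w) (heul : eulerian w)
  (hpos : forall v : V, 0 < indeg w v)
  (S : {set V}) (hS : S != set0)
  (hPsi : Psi w S / #|S|%:R <= 1 / 2) :
  exists S' : {set V}, S' \subset S /\ (#|S|%:R / 4 : R) <= #|S'|%:R /\
    forall s, s \in S' -> \sum_(v in ~: S) w v s >= indeg w s / 4.
Proof.
set S' := [set s in S | indeg w s / 4 <= \sum_(v in ~: S) w v s].
have sub : S' \subset S by apply/subsetP => x; rewrite inE => /andP[].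
exists S'; split => //; split; last by move=> s; rewrite inE => /andP[].
have hn : (0 : R) < #|S|%:R by rewrite ltr0n card_gt0.
have hP : Psi w S <= #|S|%:R / 2.
  by move: hPsi; rewrite ler_pdivrMr // mul1r mulrC.
have split_in v : indeg w v = \sum_(u in S) w u v + \sum_(u in ~: S) w u v.
  rewrite /indeg (bigID (fun u => u \in S)) /=.
  by congr (_ + _); apply: eq_bigl => u; rewrite ?inE.
have a_ge0 v : 0 <= \sum_(u in S) w u v / indeg w v.
  rewrite -mulr_suml.
  by apply: divr_ge0; [apply: sumr_ge0 => u _; apply: hw | apply: ltW].
have a_big v : v \in S :\: S' -> 3 / 4 <= \sum_(u in S) w u v / indeg w v.
  rewrite !inE => /andP[+ vS]; rewrite vS /= -ltNge => hlt.
  rewrite -mulr_suml ler_pdivlMr //.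
  move: (split_in v) hlt (hpos v) => ->. lra.
have card : (#|S :&: S'|%:R + #|S :\: S'|%:R : R) = #|S|%:R.
  by rewrite -natrD cardsID.
move/setIidPr: sub => sI; rewrite sI in card.
have hge : (#|S :\: S'|%:R * (3 / 4) : R) <= Psi w S.
  rewrite /Psi (big_setID S') /= sI.
  have h1 : 0 <= \sum_(v in S') \sum_(u in S) w u v / indeg w v.
    apply: sumr_ge0 => v _; exact: a_ge0.
  have h2 : (#|S :\: S'|%:R * (3 / 4) : R) <=
      \sum_(v in S :\: S') \sum_(u in S) w u v / indeg w v.
    rewrite mulr_natl -sumr_const; apply: ler_sum => v hv; exact: a_big.
  lra.
lra.
Qed.
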